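(* Let $1\le k\le d$ and let $\alpha^1,\dots,\alpha^k\in\mathbb{R}^d$ be such that $\alpha^1,\dots,\alpha^k,e_{k+1},\dots,e_d$ are linearly independent. Let $\alpha^{k+1}\in\mathbb{R}^d$ be such that $\sum_{i=1}^{k+1}\theta_i\alpha^i=0$ for some $\theta_i>0$ with $\sum_{i=1}^{k+1}\theta_i=1$. Let $M_1,\dots,M_{k+1}>0$ and let $a_i<b_i$ be integers for $k+1\le i\le d$. Then $$\sum_{j_1\in\mathbb{Z}}\cdots\sum_{j_k\in\mathbb{Z}}\sum_{j_{k+1}=a_{k+1}}^{b_{k+1}}\cdots\sum_{j_d=a_d}^{b_d}\min_{1\le n\le k+1}\{M_n2^{\alpha^n\cdot\vec j}\}\le C\prod_{i=k+1}^d(b_i-a_i)\prod_{i=1}^{k+1}M_i^{\theta_i},$$ where $\vec j=(j_1,\dots,j_d)$ and $C$ is independent of all $a_n$, $b_n$, $M_n$.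
   Context: $e_1,\dots,e_d$ is the standard basis of $\mathbb{R}^d$ and $\cdot$ the standard inner product. *)

(* Defs.v *)
From HB Require Import structures.
From mathcomp Require Import all_boot all_order all_algebra.
From mathcomp Require Import all_classical all_reals all_analysis.
Set Implicit Arguments. Unset Strict Implicit. Unset Printing Implicit Defensive.
Import Order.TTheory GRing.Theory Num.Theory.
Local Open Scope ring_scope.

Definition dotZ (R : realType) (d : nat) (x : 'rV[R]_d) (j : 'rV[int]_d) : R :=
  \sum_(i < d) x 0 i * (j 0 i)%:~R.

(* The d x d matrix whose rows are alpha^1,...,alpha^k, e_{k+1},...,e_d
   (0-indexed: row i is alpha (inord i) if i < k, else the i-th basis vector). *)
Definition alpha_e_mx (R : realType) (d k : nat) (alpha : 'I_k.+1 -> 'rV[R]_d)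
  : 'M[R]_d :=
  \matrix_(i < d) (if (i < k)%N then alpha (inord i) else delta_mx 0 i).

(* index set: j_1..j_k in Z, a_i <= j_i <= b_i for i = k+1..d (0-indexed i >= k) *)
Definition box (d k : nat) (a b : 'I_d -> int) : set 'rV[int]_d :=
  [set j | forall i : 'I_d, (k <= i)%N -> a i <= j 0 i <= b i].

Definition minterm (R : realType) (d k : nat) (alpha : 'I_k.+1 -> 'rV[R]_d)
  (M : 'I_k.+1 -> R) (j : 'rV[int]_d) : \bar R :=
  \big[Order.min/+oo%E]_(n < k.+1) ((M n * (2 `^ (dotZ (alpha n) j)))%:E).

(* Main.v *)
Require Import Defs.
From HB Require Import structures.
From mathcomp Require Import all_boot all_order all_algebra.
From mathcomp Require Import all_classical all_reals all_analysis.
From mathcomp Require Import ring lra zify.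
Import Order.TTheory GRing.Theory Num.Theory.
Local Open Scope ring_scope.
Set Implicit Arguments. Unset Strict Implicit. Unset Printing Implicit Defensive.
Definition Lam (R : realType) (k : nat) (theta M : 'I_k.+1 -> R) : R :=
  \sum_n theta n * ln (M n).
Definition uu (R : realType) (d k : nat) (alpha : 'I_k.+1 -> 'rV[R]_d)
  (theta M : 'I_k.+1 -> R) (j : 'rV[int]_d) (n : 'I_k.+1) : R :=
  ln (M n) + dotZ (alpha n) j * ln 2 - Lam theta M.
Definition cvec (R : realType) (d k : nat) (theta M : 'I_k.+1 -> R)
  (j : 'rV[int]_d) : 'cV[R]_d :=
  \col_p (if (p < k)%N then (ln (M (inord p)) - Lam theta M) / ln 2
          else - (j 0 p)%:~R).
Definition jR (R : realType) (d : nat) (j : 'rV[int]_d) : 'cV[R]_d :=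
  \col_i (j 0 i)%:~R.
Arguments jR {R d} j.
Definition Wv (R : realType) (d k : nat) (alpha : 'I_k.+1 -> 'rV[R]_d)
  (theta M : 'I_k.+1 -> R) (j : 'rV[int]_d) : 'cV[R]_d :=
  - (invmx (alpha_e_mx alpha) *m cvec theta M j).

Lemma ln2_gt0 (R : realType) : 0 < ln (2 : R).
Proof. by apply: ln_gt0; rewrite ltr1n. Qed.

Lemma zvec_eq (R : realType) (d k : nat) (alpha : 'I_k.+1 -> 'rV[R]_d)
  (theta M : 'I_k.+1 -> R) (j : 'rV[int]_d) :
  alpha_e_mx alpha *m jR j + cvec theta M j =
  \col_p (if (p < k)%N then uu alpha theta M j (inord p) / ln 2 else 0).
Proof.
apply/matrixP => p q; rewrite (ord1 q) !mxE.
have l2 := ln2_gt0 R.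
case: ifP => hp.
  rewrite /uu /dotZ.
  under eq_bigr do rewrite !mxE hp.
  field; exact: lt0r_neq0.
under eq_bigr do rewrite !mxE hp.
rewrite (bigD1 p) //= big1 ?addr0 => [|l hl]; last first.
  by rewrite mxE (negbTE hl) andbF mul0r.
by rewrite mxE !eqxx mul1r addrN.
Qed.

Lemma W_eq (R : realType) (d k : nat) (alpha : 'I_k.+1 -> 'rV[R]_d)
  (theta M : 'I_k.+1 -> R) (j : 'rV[int]_d) :
  alpha_e_mx alpha \in unitmx ->
  jR j - Wv alpha theta M j = invmx (alpha_e_mx alpha) *m
  \col_p (if (p < k)%N then uu alpha theta M j (inord p) / ln 2 else 0).
Proof.
by move=> hT; rewrite -zvec_eq mulmxDr mulKmx // /Wv opprK.
Qed.
Lemma minA (R : realType) (k : nat) (th u : 'I_k.+1 -> R) (n0 : 'I_k.+1) :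
  (forall i, 0 < th i) -> \sum_i th i = 1 -> \sum_i th i * u i = 0 ->
  (forall p, u n0 <= u p) -> forall p, th p * `|u p| <= - u n0.
Proof.
move=> th0 th1 thu hmin p.
set m := u n0.
have m0 : m <= 0.
  have : \sum_i th i * m <= \sum_i th i * u i.
    by apply: ler_sum => i _; rewrite ler_wpM2l ?hmin // ltW.
  by rewrite thu -mulr_suml th1 mul1r.
have thp1 : th p <= 1.
  rewrite -th1 (bigD1 p) //= lerDl; apply: sumr_ge0 => i _; exact: ltW.
have hrest : (1 - th p) * m <= \sum_(i | i != p) th i * u i.
  have -> : 1 - th p = \sum_(i | i != p) th i.
    by rewrite -th1 (bigD1 p) //= addrC addrK.
  by rewrite mulr_suml; apply: ler_sum => i _; rewrite ler_wpM2l ?hmin // ltW ?th0.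
have hsplit : th p * u p = - \sum_(i | i != p) th i * u i.
  by move: thu; rewrite (bigD1 p) //= => h; lra.
have hlow : th p * m <= th p * u p by rewrite ler_wpM2l ?hmin // ltW ?th0.
have thp0 := th0 p.
case: (lerP 0 (u p)) => hu; [rewrite ger0_norm // | rewrite ltr0_norm //]; rewrite ?hsplit; nra.
Qed.

Definition Kc (R : realType) (d k : nat) (alpha : 'I_k.+1 -> 'rV[R]_d) : R :=
  1 + \sum_(i < d) \sum_(p < d) `|invmx (alpha_e_mx alpha) i p|.
Definition Sc (R : realType) (k : nat) (theta : 'I_k.+1 -> R) : R :=
  \sum_n (theta n)^-1.
Definition dlt (R : realType) (d k : nat) (alpha : 'I_k.+1 -> 'rV[R]_d)
  (theta : 'I_k.+1 -> R) : R := ln 2 / (Kc alpha * Sc theta).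

Lemma inv_le_Sc (R : realType) (k : nat) (theta : 'I_k.+1 -> R) q :
  (forall i, 0 < theta i) -> (theta q)^-1 <= Sc theta.
Proof.
move=> th0; rewrite /Sc (bigD1 q) //= lerDl.
by apply: sumr_ge0 => i _; rewrite invr_ge0 ltW.
Qed.

Lemma Sc_gt0 (R : realType) (k : nat) (theta : 'I_k.+1 -> R) :
  (forall i, 0 < theta i) -> 0 < Sc theta.
Proof.
move=> th0; apply: lt_le_trans (inv_le_Sc ord0 th0).
by rewrite invr_gt0.
Qed.

Lemma Kc_gt0 (R : realType) (d k : nat) (alpha : 'I_k.+1 -> 'rV[R]_d) :
  0 < Kc alpha.
Proof.
rewrite /Kc; apply: lt_le_trans (ltr01 : (0 : R) < 1) _.
by rewrite lerDl; apply: sumr_ge0 => i _; apply: sumr_ge0.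
Qed.

Lemma pointwise (R : realType) (d k : nat) (alpha : 'I_k.+1 -> 'rV[R]_d)
  (theta : 'I_k.+1 -> R) :
  alpha_e_mx alpha \in unitmx ->
  (forall i, 0 < theta i) -> \sum_(i < k.+1) theta i = 1 ->
  \sum_(i < k.+1) theta i *: alpha i = 0 ->
  forall M : 'I_k.+1 -> R, (forall n, 0 < M n) -> forall j : 'rV[int]_d,
  (minterm alpha M j <=
    ((\prod_i M i `^ theta i) *
     \prod_(i : 'I_d) (if (i < k)%N then
        expR (- (dlt alpha theta * `|(jR j - Wv alpha theta M j) i 0|)) else 1))%:E)%E.
Proof.
move=> hT th0 th1 thα M M0 j.
have l2 := ln2_gt0 R.
set u := uu alpha theta M j.
have [n0 hmin] : exists n0, forall p, u n0 <= u p.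
  by case: (@arg_minP _ _ _ ord0 xpredT u isT) => i _ H; exists i => p; exact: H.
have hD : \sum_n theta n * dotZ (alpha n) j = 0.
  rewrite /dotZ.
  under eq_bigr do rewrite mulr_sumr.
  rewrite exchange_big /=; apply: big1 => i _.
  have H : \sum_n theta n * alpha n 0 i = 0.
    transitivity ((\sum_n theta n *: alpha n) 0 i); last by rewrite thα mxE.
    by rewrite summxE; apply: eq_bigr => n _; rewrite mxE.
  under eq_bigr do rewrite mulrA.
  by rewrite -mulr_suml H mul0r.
have hsum : \sum_n theta n * u n = 0.
  rewrite /u /uu.
  under eq_bigr do rewrite mulrBr mulrDr mulrA.
  rewrite sumrB big_split /= -mulr_suml hD mul0r addr0 -mulr_suml th1 mul1r.
  by rewrite /Lam subrr.
have hA := minA th0 th1 hsum hmin.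
set m := u n0.
have m0 : 0 <= - m.
  by apply: le_trans (hA n0); apply: mulr_ge0; [exact: ltW | exact: normr_ge0].
have hP : \prod_i M i `^ theta i = expR (Lam theta M).
  rewrite /Lam expR_sum; apply: eq_bigr => i _.
  by rewrite /powR gt_eqF.
have hE : M n0 * 2 `^ dotZ (alpha n0) j = expR (Lam theta M) * expR m.
  rewrite -expRD /m /u /uu.
  have -> : Lam theta M + (ln (M n0) + dotZ (alpha n0) j * ln 2 - Lam theta M)
    = ln (M n0) + dotZ (alpha n0) j * ln 2 by ring.
  by rewrite expRD lnK ?posrE // /powR gt_eqF.
apply: le_trans (bigmin_le _ n0 _) _.
rewrite hE hP lee_fin ler_wpM2l ?expR_ge0 //.
set x := jR j - Wv alpha theta M j.
set δ := dlt alpha theta.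
have Kc0 := Kc_gt0 alpha.
have Sc0 := Sc_gt0 th0.
have d0 : 0 <= δ by rewrite /δ /dlt divr_ge0 // ?ltW // mulr_gt0.
have eqP : \prod_(i : 'I_d) (if (i < k)%N then expR (- (δ * `|x i 0|)) else 1)
   = expR (\sum_(i : 'I_d) (if (i < k)%N then - (δ * `|x i 0|) else 0)).
  by rewrite expR_sum; apply: eq_bigr => i _; case: ifP => // _; rewrite expR0.
rewrite eqP ler_expR.
apply: (le_trans (y := \sum_(i : 'I_d) - (δ * `|x i 0|))); last first.
  apply: ler_sum => i _; case: ifP => // _.
  by rewrite oppr_le0 mulr_ge0.
rewrite sumrN -mulr_sumr lerNr.
set Z := Sc theta * (- m) / ln 2.
have Z0 : 0 <= Z by rewrite /Z divr_ge0 ?mulr_ge0 // ltW.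
have hz : forall p : 'I_d, `|(\col_p (if (p < k)%N then u (inord p) / ln 2 else 0)
     : 'cV[R]_d) p 0| <= Z.
  move=> p; rewrite mxE; case: ifP => hp; last by rewrite normr0.
  rewrite normrM normfV (ger0_norm (ltW l2)) /Z.
  apply: ler_wpM2r; first by rewrite invr_ge0 ltW.
  set q := inord p.
  apply: (le_trans (y := (theta q)^-1 * (- m))).
    rewrite -[`|u q|](mulKf (lt0r_neq0 (th0 q))).
    apply: ler_wpM2l; first by rewrite invr_ge0 ltW.
    exact: hA.
  by apply: ler_wpM2r => //; apply: inv_le_Sc.
have hx : forall i : 'I_d, `|x i 0| <= (\sum_p `|invmx (alpha_e_mx alpha) i p|) * Z.
  move=> i; rewrite /x W_eq // mxE.
  apply: le_trans (ler_norm_sum _ _ _) _.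
  rewrite mulr_suml; apply: ler_sum => p _.
  by rewrite normrM ler_wpM2l.
have hs : \sum_i `|x i 0| <= Kc alpha * Z.
  apply: le_trans (ler_sum _ (fun i _ => hx i)) _.
  rewrite -mulr_suml ler_wpM2r // /Kc lerDr //.
apply: le_trans (ler_wpM2l d0 hs) _.
have -> : δ * (Kc alpha * Z) = - m.
  rewrite /δ /dlt /Z; field.
  by rewrite !lt0r_neq0.
by [].
Qed.

Lemma seq_to_fin (R : realType) (T : eqType) (P : finType) (s : seq T)
  (h : T -> R) (F : P -> R) (sec : T -> P) :
  uniq s -> {in s &, injective sec} -> (forall x, x \in s -> h x <= F (sec x)) ->
  (forall p, 0 <= F p) -> \sum_(x <- s) h x <= \sum_p F p.
Proof.
move=> us inj hF F0.
apply: (le_trans (y := \sum_(x <- s) F (sec x))).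
  by rewrite big_seq [X in _ <= X]big_seq; apply: ler_sum => x xs; apply: hF.
rewrite -(big_map sec xpredT F) big_uniq; last by rewrite map_inj_in_uniq.
rewrite [X in _ <= X](bigID (fun p => p \in [seq sec i | i <- s])) /= lerDl.
by apply: sumr_ge0 => p _.
Qed.

Lemma prod_final (R : realType) (d k : nat) (B : R) (a b : 'I_d -> int) :
  1 <= B -> (forall i : 'I_d, (k <= i)%N -> a i < b i) ->
  \prod_(i : 'I_d) (if (i < k)%N then B else (absz (b i - a i)).+1%:R)
  <= B ^+ d * 2 ^+ d * \prod_(i < d | (k <= i)%N) (b i - a i)%:~R.
Proof.
move=> B1 hab.
rewrite (bigID (fun i : 'I_d => (k <= i)%N)) /=.
have -> : \prod_(i < d | (k <= i)%N) (if (i < k)%N then B else (absz (b i - a i)).+1%:R)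
   = \prod_(i < d | (k <= i)%N) (absz (b i - a i)).+1%:R.
  by apply: eq_bigr => i hi; rewrite ltnNge hi.
have -> : \prod_(i < d | ~~ (k <= i)%N) (if (i < k)%N then B else (absz (b i - a i)).+1%:R)
   = \prod_(i < d | ~~ (k <= i)%N) B.
  by apply: eq_bigr => i hi; rewrite ltnNge hi.
have hc : forall (c : R) (Q : pred 'I_d), 1 <= c -> \prod_(i < d | Q i) c <= c ^+ d.
  move=> c Q c1; rewrite big_mkcond /=.
  apply: (le_trans (y := \prod_(i < d) c)); last by rewrite prodr_const card_ord.
  have c0 : 0 <= c by apply: le_trans c1.
  by apply: ler_prod => i _; case: ifP => _; rewrite ?c0 ?lexx ?ler01 ?c1.
have B0 : 0 <= B by apply: le_trans B1.
rewrite mulrC -mulrA; apply: ler_pM.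
- by apply: prodr_ge0.
- by apply: prodr_ge0 => i _.
- exact: hc.
apply: (le_trans (y := \prod_(i < d | (k <= i)%N) (2 * (b i - a i)%:~R))).
  apply: ler_prod => i hi; apply/andP; split => //.
  have h1 := hab i hi.
  have h0 : (0 <= b i - a i)%R by rewrite subr_ge0 ltW.
  rewrite -natr1 natr_absz gtr0_norm ?subr_gt0 //.
  have : ((1 : R) <= (b i - a i)%:~R) by rewrite ler1z; lia.
  lra.
rewrite big_split /=; apply: ler_wpM2r.
  by apply: prodr_ge0 => i hi; rewrite ler0z subr_ge0 ltW // hab.
by apply: hc; rewrite ler1n.
Qed.

Lemma ar1 (N : nat) (z : int) : (absz z <= N)%N -> (absz (z + N%:Z)%R < (2 * N).+1)%N.
Proof. lia. Qed.
Lemma ar2 (N : nat) (x y : int) : (absz x <= N)%N -> (absz y <= N)%N ->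
  absz (x + N%:Z)%R = absz (y + N%:Z)%R -> x = y.
Proof. lia. Qed.
Lemma ar3 (N : nat) (x a b : int) : a <= x <= b -> (absz (b - a)%R <= N)%N ->
  (absz (x - a)%R < (2 * N).+1)%N.
Proof. move=> /andP [h1 h2]; lia. Qed.
Lemma ar4 (x y a : int) : a <= x -> a <= y -> absz (x - a)%R = absz (y - a)%R -> x = y.
Proof. lia. Qed.
Lemma ar5 (x a : int) : a <= x -> a + (absz (x - a))%:Z = x.
Proof. lia. Qed.
Lemma ar6 (x a b : int) : a <= x <= b -> (absz (x - a)%R <= absz (b - a)%R)%N.
Proof. move=> /andP [h1 h2]; lia. Qed.
Lemma ar7 (N : nat) (z : int) : (absz z <= N)%N -> 0 <= z + N%:Z.
Proof. lia. Qed.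

Lemma geom1D (R : realType) (δ c : R) (n : nat) : 0 < δ ->
  \sum_(m < n) expR (- (δ * `|m%:R - c|)) <= 3 / (1 - expR (- δ)).
Proof.
move=> d0.
set q := expR (- δ).
have q0 : 0 < q by apply: expR_gt0.
have q1 : q < 1 by rewrite expR_lt1 oppr_lt0.
have e1 : forall x, 0 <= x -> expR (- (δ * x)) <= 1.
  by move=> x x0; rewrite expR_le1 oppr_le0 mulr_ge0 // ltW.
pose H (n : nat) : R := if n%:R <= c then expR (- (δ * (c - n%:R)))
                        else 3 - expR (- (δ * (n%:R - c))).
have Hle : forall n, H n <= 3.
  move=> m; rewrite /H; case: ifP => hc.
    by apply: (le_trans (e1 _ _)); [rewrite subr_ge0 | lra].
  have := expR_gt0 (- (δ * (m%:R - c))); lra.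
suff key : forall n, (1 - q) * \sum_(m < n) expR (- (δ * `|m%:R - c|)) <= H n.
  rewrite ler_pdivlMr ?subr_gt0 // mulrC.
  exact: le_trans (key n) (Hle n).
elim=> [|m IH].
  rewrite big_ord0 mulr0 /H; case: ifP => hc; first exact: ltW (expR_gt0 _).
  have : expR (- (δ * (0%:R - c))) <= 1.
    by apply: e1; move: hc => /negbT; rewrite -ltNge; lra.
  lra.
rewrite big_ord_recr /= mulrDr.
have hS : (m.+1%:R : R) = m%:R + 1 by rewrite -natr1.
rewrite /H hS.
move: IH; rewrite /H.
case: (lerP (m%:R + 1) c) => h1.
  have h0 : m%:R <= c by lra.
  rewrite h0 => IH.
  rewrite ler0_norm; last lra.
  have := expR_gt0 (- (δ * (c - (m%:R + 1)))).
  set E := expR _.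
  move=> E0.
  rewrite opprB.
  have eq : expR (- (δ * (c - m%:R))) = E * q.
    by rewrite /q /E -expRD; congr expR; ring.
  rewrite eq in IH *.
  have := mulr_ge0 (ltW E0) (sqr_ge0 (1 - q)).
  nra.
case: (lerP (m%:R) c) => h0 IH.
  have := e1 (c - m%:R) ltac:(lra).
  have := e1 (m%:R + 1 - c) ltac:(lra).
  nra.
have -> : expR (- (δ * (m%:R + 1 - c))) = expR (- (δ * (m%:R - c))) * q.
  by rewrite /q -expRD; congr expR; ring.
have := expR_gt0 (- (δ * (m%:R - c))).
nra.
Qed.

Lemma count_le (R : realType) (n c : nat) :
  \sum_(m < n) ((m <= c)%N%:R : R) <= c.+1%:R.
Proof.
suff : \sum_(m < n) ((m <= c)%N%:R : R) <= (minn n c.+1)%:R.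
  move/le_trans; apply; rewrite ler_nat; lia.
elim: n => [|n IH]; first by rewrite big_ord0.
rewrite big_ord_recr /=.
case: (leqP n c) => h.
  have -> : minn n.+1 c.+1 = (minn n c.+1).+1 by lia.
  by rewrite -natr1 lerD2r.
have -> : minn n.+1 c.+1 = minn n c.+1 by lia.
by rewrite addr0.
Qed.

Lemma sum_one0 (R : realType) (n : nat) : (0 < n)%N ->
  \sum_(m < n) ((val m == 0)%N%:R : R) = 1.
Proof.
case: n => // n _; rewrite big_ord_recl /= big1 ?addr0 // => i _.
Qed.

Lemma prod_sum (R : realType) (d n k : nat)
  (g : 'I_d -> {ffun 'I_d -> 'I_n} -> 'I_n -> R) (cnt : 'I_d -> nat) (B : R) :
  (0 < n)%N -> 0 <= B ->
  (forall (i : 'I_d) f2 m, 0 <= g i f2 m) ->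
  (forall (i : 'I_d) f2, (i < k)%N -> \sum_m g i f2 m <= B) ->
  \sum_(f2 : {ffun 'I_d -> 'I_n}) \sum_(f1 : {ffun 'I_d -> 'I_n})
     \prod_(i : 'I_d) (if (i < k)%N then g i f2 (f1 i) * ((val (f2 i) == 0)%N%:R)
              else ((f2 i <= cnt i)%N%:R * (val (f1 i) == 0)%N%:R))
  <= \prod_(i : 'I_d) (if (i < k)%N then B else (cnt i).+1%:R).
Proof.
move=> n0 B0 g0 gB.
pose G (i : 'I_d) (m : 'I_n) : R :=
  if (i < k)%N then B * ((val m == 0)%N%:R) else ((m <= cnt i)%N%:R).
apply: (le_trans (y := \sum_(f2 : {ffun 'I_d -> 'I_n}) \prod_i G i (f2 i))).
  apply: ler_sum => f2 _.
  rewrite -(bigA_distr_bigA (fun (i : 'I_d) (m : 'I_n) =>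
     (if (i < k)%N then g i f2 m * ((val (f2 i) == 0)%N%:R)
              else ((f2 i <= cnt i)%N%:R * (val m == 0)%N%:R)) : R)) /=.
  apply: ler_prod => i _; apply/andP; split.
    apply: sumr_ge0 => m _; case: ifP => _; apply: mulr_ge0 => //.
  rewrite /G; case: ifP => hik.
    by rewrite -mulr_suml ler_wpM2r // gB.
  by rewrite -mulr_sumr sum_one0 // mulr1.
rewrite -(bigA_distr_bigA G) /=.
apply: ler_prod => i _; apply/andP; split.
  by apply: sumr_ge0 => m _; rewrite /G; case: ifP => _ //; apply: mulr_ge0.
rewrite /G; case: ifP => hik.
  by rewrite -mulr_sumr sum_one0 // mulr1.
exact: count_le.
Qed.

Lemma Wv_dep (R : realType) (d k : nat) (alpha : 'I_k.+1 -> 'rV[R]_d)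
  (theta M : 'I_k.+1 -> R) (x y : 'rV[int]_d) :
  (forall i : 'I_d, (k <= i)%N -> x 0 i = y 0 i) ->
  Wv alpha theta M x = Wv alpha theta M y.
Proof.
move=> H; rewrite /Wv /cvec; congr (- (_ *m _)).
apply/matrixP => p q; rewrite !mxE; case: ifP => hp //.
by rewrite H // leqNgt hp.
Qed.

Theorem lemma5p3 (R : realType) (d k : nat) (alpha : 'I_k.+1 -> 'rV[R]_d)
  (theta : 'I_k.+1 -> R) :
  (1 <= k)%N -> (k <= d)%N ->
  row_free (alpha_e_mx alpha) ->
  (forall i, 0 < theta i) -> \sum_(i < k.+1) theta i = 1 ->
  \sum_(i < k.+1) theta i *: alpha i = 0 ->
  exists C : R, forall (M : 'I_k.+1 -> R) (a b : 'I_d -> int),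
    (forall n, 0 < M n) ->
    (forall i : 'I_d, (k <= i)%N -> a i < b i) ->
    (\esum_(j in box k a b) minterm alpha M j <=
      (C * (\prod_(i < d | (k <= i)%N) (b i - a i)%:~R)
         * \prod_(i < k.+1) (M i `^ theta i))%:E)%E.
Proof.
move=> hk hkd hfree th0 th1 thα.
have hT : alpha_e_mx alpha \in unitmx by rewrite -row_free_unit.
set δ := dlt alpha theta.
have d0 : 0 < δ by rewrite /δ /dlt divr_gt0 ?ln2_gt0 // mulr_gt0 ?Kc_gt0 ?Sc_gt0.
have q1 : expR (- δ) < 1 by rewrite expR_lt1 oppr_lt0.
have q0 := expR_gt0 (- δ).
set B := 3 / (1 - expR (- δ)).
have B1 : 1 <= B by rewrite /B ler_pdivlMr ?subr_gt0 // mul1r; lra.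
have B0 : 0 <= B by apply: le_trans B1.
exists (B ^+ d * 2 ^+ d).
move=> M a b M0 hab.
set P := \prod_(i < k.+1) M i `^ theta i.
have P0 : 0 <= P by apply: prodr_ge0 => i _; apply: powR_ge0.
apply: ge_ereal_sup => _ [X [finX XS] <-].
apply: le_trans (lee_fsum finX (fun x _ => pointwise hT th0 th1 thα M0 x)) _.
rewrite fsbig_finite //= sumEFin lee_fin.
set s := (X in \sum_(_ <- X) _).
rewrite -mulr_sumr [X in _ <= X]mulrC ler_wpM2l //.
match goal with |- ?g => idtac g end.
have inbox : forall x, x \in s -> box k a b x.
  by move=> x; rewrite /s in_fset_set // inE => /XS.
pose N := (\sum_(x <- s) \sum_(i < d) absz (x 0%R i) + \sum_(i < d) absz ((b i - a i)%R))%N.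
have hN1 : forall x, x \in s -> forall i, (absz (x 0%R i) <= N)%N.
  move=> x xs i; rewrite /N; apply: leq_trans _ (leq_addr _ _).
  rewrite (big_rem x xs) /=; apply: leq_trans _ (leq_addr _ _).
  by rewrite (bigD1 i) //= leq_addr.
have hN2 : forall i, (absz ((b i - a i)%R) <= N)%N.
  move=> i; rewrite /N; apply: leq_trans _ (leq_addl _ _).
  by rewrite (bigD1 i) //= leq_addr.
clearbody N.
pose n := (2 * N).+1.
pose rowOf (f2 : {ffun 'I_d -> 'I_n}) : 'rV[int]_d :=
  \row_i (if (i < k)%N then 0 else a i + ((f2 i : nat)%:Z)).
pose g (i : 'I_d) (f2 : {ffun 'I_d -> 'I_n}) (m : 'I_n) : R :=
  expR (- (δ * `|(m : nat)%:R - (N%:R + Wv alpha theta M (rowOf f2) i 0)|)).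
pose cnt (i : 'I_d) := absz (b i - a i).
pose F (p : {ffun 'I_d -> 'I_n} * {ffun 'I_d -> 'I_n}) : R :=
  \prod_(i : 'I_d) (if (i < k)%N then g i p.1 (p.2 i) * ((val (p.1 i) == 0)%N%:R)
              else ((p.1 i <= cnt i)%N%:R * (val (p.2 i) == 0)%N%:R)).
pose sec (x : 'rV[int]_d) : {ffun 'I_d -> 'I_n} * {ffun 'I_d -> 'I_n} :=
  ([ffun i : 'I_d => if (i < k)%N then ord0 else inord (absz (x 0%R i - a i))],
   [ffun i : 'I_d => if (i < k)%N then inord (absz (x 0%R i + N%:Z)) else ord0]).
have F0 : forall p, 0 <= F p.
  move=> p; apply: prodr_ge0 => i _; case: ifP => _; apply: mulr_ge0 => //.
  exact: expR_ge0.
apply: le_trans (seq_to_fin (F := F) (sec := sec) _ _ _ F0) _.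
- exact: finmap.fset_uniq.
- move=> x y xs ys H; apply/rowP => i.
  case: H => /ffunP /(_ i) E1 /ffunP /(_ i) E2.
  rewrite !ffunE in E1 E2.
  have e1 := congr1 (@nat_of_ord n) E1; have e2 := congr1 (@nat_of_ord n) E2.
  clear E1 E2.
  have bx := inbox x xs i; have bY := inbox y ys i.
  have hx := hN1 x xs i; have hy := hN1 y ys i.
  have hb := hN2 i.
  case: (ltnP i k) => hi.
    rewrite hi (inordK (ar1 hx)) (inordK (ar1 hy)) in e2.
    exact: ar2 hx hy e2.
  move: (bx hi) (bY hi) => bxi byi.
  rewrite ltnNge hi /= (inordK (ar3 bxi hb)) (inordK (ar3 byi hb)) in e1.
  move: bxi byi => /andP [x1 _] /andP [y1 _].
  exact: ar4 x1 y1 e1.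
- move=> x xs; rewrite /F; apply: ler_prod => i _; apply/andP; split.
    by case: ifP => _; [exact: expR_ge0 | exact: ler01].
  have bx := inbox x xs i.
  have hx := hN1 x xs i.
  have hb := hN2 i.
  rewrite /sec !ffunE /=; case: ifP => hi.
    rewrite mulr1 /g (inordK (ar1 hx)).
    have -> : Wv alpha theta M (rowOf [ffun i0 : 'I_d => if (i0 < k)%N then ord0
        else inord (absz (x 0%R i0 - a i0))]) = Wv alpha theta M x.
      apply: Wv_dep => i0 hi0.
      have bx0 := inbox x xs i0 hi0.
      have hb0 := hN2 i0.
      rewrite mxE ffunE ltnNge hi0 /= (inordK (ar3 bx0 hb0)).
      by move: bx0 => /andP [x1 _]; apply: ar5.
    have E : (jR x - Wv alpha theta M x) i 0 =
        ((absz (x 0%R i + N%:Z))%:R : R) - (N%:R + Wv alpha theta M x i 0).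
      rewrite natr_absz (ger0_norm (ar7 hx)) intrD [in LHS]mxE [(jR x) i 0]mxE.
      rewrite -[(N%:Z)%:~R]/((N%:R : R)) [(- Wv alpha theta M x) i 0]mxE.
      ring.
    by rewrite -E /δ.
  have bxi : (a i <= x 0%R i <= b i) by apply: bx; rewrite leqNgt hi.
  rewrite (inordK (ar3 bxi hb)) (ar6 bxi) mul1r.
  by [].
rewrite -(pair_bigA _ (fun f2 f1 => F (f2, f1))) /=.
apply: le_trans (prod_final B1 hab).
apply: (prod_sum (g := g)) => //.
- by move=> i f2 m; apply: expR_ge0.
- by move=> i f2 _; apply: geom1D.
Qed.
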